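(* Consider an HTSP instance in which all speeds are powers of two, and let $M>0$ be at least its optimal makespan. Then for every level $\ell\ge0$, $\mathrm{MST}(G/V_{<\ell})\le M\sum_{j\ge \ell-1}2^j\mu_j$.
   Context: HTSP: the input is a finite metric space $(V,d)$, a depot $r\in V$, and $k$ vehicles with speeds $\lambda_1,\dots,\lambda_k\ge1$. A solution is a collection of tours, each starting and ending at $r$, that cover $V$. Its makespan is $\max_i d(\tau_i)/\lambda_i$. Here all speeds are powers of two, $\mu_j$ is the number of vehicles of speed $2^j$, and $\mu_{-1}=0$. Levels relative to $M$: $V_0=\{u:d(r,u)\le M\}$, and for $i\ge1$, $V_i=\{u:2^{i-1}M<d(r,u)\le2^iM\}$. Also $V_{<\ell}=\bigcup_{j<\ell}V_j$, with $V_{<0}=\emptyset$. $G$ is the complete graph on $V$ weighted by $d$. $G/U$ contracts $U$ to a single vertex, keeping parallel edges. $\mathrm{MST}$ denotes the minimum spanning tree weight. *)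

(* Defs.v *)
From HB Require Import structures.
From mathcomp Require Import all_boot all_order all_algebra.
Set Implicit Arguments. Unset Strict Implicit. Unset Printing Implicit Defensive.
Import Order.TTheory GRing.Theory Num.Theory.
Local Open Scope ring_scope.

Section HTSP.
Variables (R : realFieldType) (V : finType) (d : V -> V -> R).

Definition is_metric : Prop :=
  [/\ forall x y, d x y = 0 <-> x = y,
      forall x y, d x y = d y x &
      forall x y z, d x z <= d x y + d y z].

Fixpoint walk_len (x : V) (s : seq V) : R :=
  if s is y :: s' then d x y + walk_len y s' else 0.

Definition tour_len (r : V) (s : seq V) : R := walk_len r (rcons s r).

Definition makespan (r : V) (k : nat) (lam : 'I_k -> R) (tau : 'I_k -> seq V) : R :=
  \big[Num.max/0]_(i < k) (tour_len r (tau i) / lam i).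

Definition covers (r : V) (k : nat) (tau : 'I_k -> seq V) : Prop :=
  forall v : V, exists i : 'I_k, v \in r :: tau i.

Definition in_level (r : V) (M : R) (j : nat) (u : V) : bool :=
  if j is j'.+1 then (2 ^+ j' * M < d r u) && (d r u <= 2 ^+ j * M)
  else d r u <= M.

Definition V_lt (r : V) (M : R) (l : nat) : {set V} :=
  [set u | [exists j : 'I_l, in_level r M j u]].

(* Quotient map V -> vertices of G/U : the contracted vertex is None *)
Definition contr (U : {set V}) (u : V) : option V :=
  if u \in U then None else Some u.

Definition contr_vertices (U : {set V}) : {set option V} := [set contr U u | u : V].

(* an edge of G/U is an (unordered) edge {u,v} of G, represented by one
   orientation (u,v); its endpoints in G/U are contr u, contr v (parallel
   edges kept, loops discarded) *)
Definition contr_adj (U : {set V}) (F : {set V * V}) : rel (option V) :=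
  fun a b => [exists p in F, ((contr U p.1 == a) && (contr U p.2 == b))
                           || ((contr U p.1 == b) && (contr U p.2 == a))].

Definition spanning_tree_contr (U : {set V}) (F : {set V * V}) : Prop :=
  [/\ forall p, p \in F -> contr U p.1 != contr U p.2,
      forall p, p \in F -> (p.2, p.1) \notin F,
      forall a b, a \in contr_vertices U -> b \in contr_vertices U ->
                  connect (contr_adj U F) a b &
      #|F| = (#|contr_vertices U| - 1)%N].

Definition weight (F : {set V * V}) : R := \sum_(p in F) d p.1 p.2.

End HTSP.

(* mu_j = number of vehicles of speed 2^j, speeds given as 2^(e i) *)
Definition mu (k : nat) (e : 'I_k -> nat) (j : nat) : nat := #|[set i | e i == j]|.

(* Main.v *)
Require Import Defs.
From HB Require Import structures.
From mathcomp Require Import all_boot all_order all_algebra.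
Import Order.TTheory GRing.Theory Num.Theory.
Local Open Scope ring_scope.

Section Build.
Variables (V : finType) (c : V -> option V).

Fixpoint build (x : V) (s : seq V) (seen : seq (option V)) : seq (V * V) :=
  if s is y :: s' then
    if c y \in seen then build y s' seen else (x, y) :: build y s' (c y :: seen)
  else [::].

Lemma build_snd x s seen p : p \in build x s seen ->
  (c p.2 \notin seen) && (p.2 \in s).
Proof.
elim: s x seen => //= y s IH x seen.
case: ifP => Hy.
  by move/IH => /andP[H1 H2]; rewrite H1 in_cons H2 orbT.
rewrite in_cons => /orP[/eqP -> /= | /IH].
  by rewrite Hy in_cons eqxx.
by rewrite in_cons negb_or => /andP[/andP[_ H1] H2]; rewrite H1 in_cons H2 orbT.
Qed.

Lemma build_loop x s seen p : c x \in seen -> p \in build x s seen ->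
  c p.1 != c p.2.
Proof.
elim: s x seen => //= y s IH x seen Hx.
case: ifP => Hy; first exact: IH.
rewrite in_cons => /orP[/eqP -> /= | ]; last by apply: IH; rewrite in_cons eqxx.
by apply/eqP => E; rewrite -E Hx in Hy.
Qed.

Lemma build_rev x s seen p : c x \in seen -> p \in build x s seen ->
  (p.2, p.1) \notin build x s seen.
Proof.
elim: s x seen => //= y s IH x seen Hx.
case: ifP => Hy; first exact: IH.
have Hy' : c y \in c y :: seen by rewrite in_cons eqxx.
rewrite !in_cons; case/orP => [/eqP Ep | Hp].
  subst p => /=; apply/negP => /orP[/eqP [E1 E2] | H].
    by subst; rewrite Hx in Hy.
  by move: (build_snd _ _ _ _ H) => /= /andP[]; rewrite in_cons Hx orbT.
rewrite negb_or (IH _ _ Hy' Hp) andbT.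
apply/eqP => -[E1 E2]; move: (build_snd _ _ _ _ Hp) => /andP[].
by rewrite E1 in_cons Hx orbT.
Qed.

Lemma build_uniq x s seen : uniq (map (fun p => c p.2) (build x s seen)).
Proof.
elim: s x seen => //= y s IH x seen.
case: ifP => Hy //=.
rewrite IH andbT; apply/mapP => -[p Hp E].
by move: (build_snd _ _ _ _ Hp) => /andP[]; rewrite -E in_cons eqxx.
Qed.

Lemma build_cover x s seen y : y \in s ->
  (c y \in seen) || (c y \in map (fun p => c p.2) (build x s seen)).
Proof.
elim: s x seen => //= z s IH x seen.
rewrite in_cons => /orP[/eqP -> | Hy].
  by case: ifP => /= _; rewrite ?in_cons ?eqxx ?orbT //.
case: ifP => Hz; first exact: IH.
move: (IH z (c z :: seen) Hy); rewrite /= !in_cons.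
by case: (c y == c z); case: (c y \in seen); case: (c y \in _).
Qed.

Lemma build_conn (e : rel (option V)) t x s seen :
  (forall p, p \in build x s seen -> e (c p.2) (c p.1)) ->
  c x \in seen -> (forall z, z \in seen -> connect e z t) ->
  forall y, y \in s -> connect e (c y) t.
Proof.
elim: s x seen => [|z s IH] x seen //=.
case: ifP => Hz He Hx Hs y.
  rewrite in_cons => /orP[/eqP -> | ]; first exact: Hs.
  exact: (IH z seen He Hz Hs y).
have Hzt : connect e (c z) t.
  apply: connect_trans (Hs _ Hx); apply: connect1.
  by apply: (He (x, z)); rewrite in_cons eqxx.
have He' : forall p, p \in build z s (c z :: seen) -> e (c p.2) (c p.1).
  by move=> p Hp; apply: He; rewrite in_cons Hp orbT.
have Hs' : forall w, w \in c z :: seen -> connect e w t.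
  by move=> w; rewrite in_cons => /orP[/eqP -> | /Hs].
rewrite in_cons => /orP[/eqP -> // | ].
by apply: (IH z (c z :: seen)) => //; rewrite in_cons eqxx.
Qed.

Variables (R : realFieldType) (d : V -> V -> R).

Lemma build_len x s seen : (forall a b, 0 <= d a b) ->
  \sum_(p <- build x s seen) d p.1 p.2 <= walk_len d x s.
Proof.
move=> Hd; elim: s x seen => /= [|y s IH] x seen; first by rewrite big_nil.
case: ifP => Hy.
  by apply: le_trans (IH _ _) _; rewrite lerDr.
by rewrite big_cons lerD2l.
Qed.

End Build.

Section Aux.
Variables (R : realFieldType) (V : finType) (d : V -> V -> R).

Lemma d_ge0 : is_metric d -> forall a b, 0 <= d a b.
Proof.
case=> Hd0 Hsym Htri a b.
have := Htri a b a; rewrite (Hsym b a) ((proj2 (Hd0 a a)) erefl) -mulr2n.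
by rewrite pmulrn_lge0.
Qed.

Lemma walk_len_ge0 : is_metric d -> forall x s, 0 <= walk_len d x s.
Proof.
move=> Hm x s; elim: s x => //= y s IH x.
by apply: addr_ge0 => //; apply: d_ge0.
Qed.

Lemma walk_len_cat x s1 s2 :
  walk_len d x (s1 ++ s2) = walk_len d x s1 + walk_len d (last x s1) s2.
Proof.
elim: s1 x => /= [|y s1 IH] x; first by rewrite add0r.
by rewrite IH addrA.
Qed.

Lemma walk_dist : is_metric d -> forall x s u, u \in s -> d x u <= walk_len d x s.
Proof.
move=> Hm x s; elim: s x => //= y s IH x u.
rewrite in_cons => /orP[/eqP -> | Hu].
  by rewrite lerDl walk_len_ge0.
case: Hm => Hd0 Hsym Htri.
apply: le_trans (Htri x y u) _; rewrite lerD2l; exact: IH.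
Qed.

Lemma le_bigmax_seq (I : eqType) (s : seq I) (F : I -> R) x :
  x \in s -> F x <= \big[Num.max/0]_(j <- s) F j.
Proof.
elim: s => //= a s IH; rewrite in_cons big_cons le_max.
by case/orP => [/eqP -> | /IH ->]; rewrite ?lexx ?orbT.
Qed.

Lemma Vlt_le r M u : 0 < M -> forall n m, (m <= n)%N -> d r u <= 2 ^+ m * M ->
  u \in V_lt d r M n.+1.
Proof.
move=> HM n; elim: n => [|n IH] m Hmn Hd.
  rewrite inE; apply/existsP; exists ord0 => /=.
  by move: Hmn; rewrite leqn0 => /eqP Hm; move: Hd; rewrite Hm expr0 mul1r.
case: (leP (d r u) (2 ^+ n * M)) => H.
  have := IH n (leqnn n) H; rewrite !inE => /existsP [j Hj].
  by apply/existsP; exists (widen_ord (leqnSn _) j).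
rewrite inE; apply/existsP; exists (@ord_max n.+1) => /=.
rewrite H /=; apply: le_trans Hd _; apply: ler_wpM2r; first exact: ltW.
by apply: ler_weXn2l => //; rewrite ler1n.
Qed.

Lemma walk_flat (I : Type) r (f : I -> seq V) (s : seq I) :
  walk_len d r (flatten [seq rcons (f i) r | i <- s]) =
  \sum_(i <- s) tour_len d r (f i).
Proof.
elim: s => [|i s IH] /=; first by rewrite big_nil.
by rewrite big_cons walk_len_cat last_rcons IH.
Qed.

End Aux.
Arguments d_ge0 {R V d}. Arguments walk_len_ge0 {R V d}. Arguments walk_dist {R V d}.
Arguments Vlt_le {R V d r M u}. Arguments walk_flat {R V d I}.
Arguments build {V} c x s seen.
Arguments build_snd {V c x s seen p}. Arguments build_loop {V c x s seen p}.
Arguments build_rev {V c x s seen p}. Arguments build_uniq {V} c x s seen.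
Arguments build_cover {V} c x s seen y. Arguments build_conn {V c e t x s seen}.
Arguments build_len {V} c {R} d x s seen.

Lemma sum_ite (R : realFieldType) (s : seq nat) a (x : R) : uniq s ->
  \sum_(j <- s) (if a == j then x else 0) = if a \in s then x else 0.
Proof.
elim: s => [|b s IH] /=; first by rewrite big_nil.
case/andP => Hb Hs; rewrite big_cons IH // in_cons.
case: (eqVneq a b) => [-> | _] /=; last by rewrite add0r.
by rewrite (negbTE Hb) addr0.
Qed.

Theorem lemma3 (R : realFieldType) (V : finType) (d : V -> V -> R) (r : V)
    (k : nat) (e : 'I_k -> nat) (M : R) :
  is_metric d ->
  0 < M ->
  (exists tau : 'I_k -> seq V,
      covers r tau /\ makespan d r (fun i => 2 ^+ e i) tau <= M) ->
  forall l : nat,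
  exists F : {set V * V},
    spanning_tree_contr (V_lt d r M l) F /\
    weight d F <= M * \sum_(l.-1 <= j < (\max_(i < k) e i).+1)
                        (2 ^+ j * (mu e j)%:R).
Proof.
move=> Hmet HM [tau [Hcov Hmk]] l.
set U := V_lt d r M l.
set c := contr U.
set I := [seq i <- index_enum 'I_k | (l.-1 <= e i)%N].
set w := flatten [seq rcons (tau i) r | i <- I].
set E := build c r w [:: c r].
exists [set p in E].
have Hd := d_ge0 Hmet.
have Hdrr : d r r = 0 by case: Hmet => Hd0 _ _; apply/Hd0.
have HrU : (0 < l)%N -> r \in U.
  move=> Hl; rewrite /U -(prednK Hl).
  apply: (Vlt_le HM _ 0%N) => //.
  by rewrite Hdrr expr0 mul1r ltW.
have Htl : forall i, tour_len d r (tau i) <= 2 ^+ (e i) * M.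
  move=> i; rewrite mulrC -ler_pdivrMr ?exprn_gt0 //.
  apply: le_trans Hmk; rewrite /makespan.
  by apply: (@le_bigmax_seq R _ _ (fun i => tour_len d r (tau i) / 2 ^+ e i)); rewrite mem_index_enum.
have Hcov' : forall u, c u != c r -> u \in w.
  move=> u Hu.
  have HuU : u \notin U.
    apply/negP => HuU; move: Hu; rewrite /c /contr HuU.
    suff -> : r \in U by [].
    apply: HrU; move: HuU; rewrite /U inE => /existsP [j _].
    exact: (leq_ltn_trans (leq0n _) (ltn_ord j)).
  have Hur : u != r by apply/eqP => Eu; move: Hu; rewrite Eu eqxx.
  have [i Hi] := Hcov u.
  move: Hi; rewrite in_cons (negbTE Hur) /= => Hi.
  case Hle: (l.-1 <= e i)%N.
    apply/flatten_mapP; exists i.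
      by rewrite mem_filter Hle mem_index_enum.
    by rewrite mem_rcons in_cons Hi orbT.
  exfalso; move/negP: HuU; apply.
  have Hdu : d r u <= 2 ^+ (e i) * M.
    apply: le_trans (Htl i); apply: walk_dist => //.
    by rewrite mem_rcons in_cons Hi orbT.
  move: Hle => /negbT; rewrite -ltnNge => Hle.
  have Hl0 : (0 < l)%N.
    by move: Hle; case: (l).
  rewrite /U -(prednK Hl0).
  by apply: (Vlt_le HM _ _ _ Hdu); apply: ltnW.
have Hcr : c r \in [:: c r] by rewrite in_cons eqxx.
have Huniq := build_uniq c r w [:: c r].
have HuE : uniq E := map_uniq Huniq.
set A := contr_adj U [set p in E].
have Hsym : symmetric A.
  move=> a b; rewrite /A /contr_adj; apply: eq_existsb => p.
  by rewrite orbC.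
have Hc : forall u, connect A (c u) (c r).
  move=> u; case: (eqVneq (c u) (c r)) => [-> | Hu]; first exact: connect0.
  apply: (build_conn (x := r) (s := w) (seen := [:: c r])) => //.
  - move=> p Hp; rewrite /A /contr_adj; apply/existsP; exists p.
    by rewrite inE Hp /= !eqxx orbT.
  - by move=> z; rewrite in_cons in_nil orbF => /eqP ->; exact: connect0.
  - exact: Hcov'.
split; first split.
- by move=> p; rewrite inE; apply: build_loop.
- by move=> p; rewrite !inE; apply: build_rev.
- move=> a b /imsetP [u _ ->] /imsetP [v _ ->].
  apply: connect_trans (Hc u) _.
  by rewrite (sym_connect_sym Hsym); apply: Hc.
- have Hcv : contr_vertices U = c r |: [set z in map (fun p => c p.2) E].
    apply/setP => z; rewrite in_setU1 in_set.
    apply/imsetP/orP.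
      case=> u _ ->; rewrite -/c; case: (eqVneq (c u) (c r)) => [-> | H]; first by left.
      right; move: (build_cover c r w [:: c r] u (Hcov' u H)).
      by rewrite in_cons in_nil orbF (negbTE H).
    case=> [/eqP -> | /mapP [p _ ->]]; first by exists r.
    by exists p.2.
  have Hnot : c r \notin [set z in map (fun p => c p.2) E].
    rewrite in_set; apply/mapP => -[p Hp Ep].
    by move: (build_snd Hp) => /andP[]; rewrite -Ep in_cons eqxx.
  by rewrite Hcv cardsU1 Hnot !cardsE (card_uniqP HuE) (card_uniqP Huniq) size_map add1n subn1.
- rewrite /weight.
  have -> : \sum_(p in [set p in E]) d p.1 p.2 = \sum_(p <- E) d p.1 p.2.
    by rewrite big_uniq //; apply: eq_bigl => p; rewrite inE.
  apply: le_trans (build_len c d r w [:: c r] Hd) _.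
  rewrite /w walk_flat.
  apply: le_trans (ler_sum _ (fun i _ => Htl i)) _.
  have Hsum : \sum_(l.-1 <= j < (\max_(i < k) e i).+1) 2 ^+ j * (mu e j)%:R
      = \sum_(i <- index_enum 'I_k | (l.-1 <= e i)%N) (2 ^+ e i : R).
    have step : forall j, 2 ^+ j * (mu e j)%:R =
        \sum_(i <- index_enum 'I_k) (if e i == j then 2 ^+ (e i) else 0 : R).
      move=> j; rewrite -big_mkcond /=.
      rewrite (eq_bigr (fun _ => 2 ^+ j)); last by move=> i /eqP ->.
      rewrite mulr_natr /mu.
      rewrite -[RHS]/(\sum_(i in [pred i | e i == j]) (2 ^+ j : R)).
      by rewrite sumr_const cardsE.
    rewrite (eq_bigr _ (fun j _ => step j)) exchange_big /= [RHS]big_mkcond /=.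
    apply: eq_bigr => i _.
    rewrite sum_ite ?iota_uniq // mem_index_iota ltnS leq_bigmax andbT //.
  by rewrite /I big_filter Hsum mulr_sumr; apply: ler_sum => i _; rewrite mulrC.
Qed.
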